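(* Let $(Y,d)$ be a complete separable metric space and $f:Y\to Y$ continuous. Let $K\neq\varnothing$ be an isolated invariant set of $f$, and let $N,N'$ be two $f$-admissible isolating neighborhoods of $K$ with \[ N\subset \operatorname{int}N'\cap f^{-1}(\operatorname{int}N'). \] Assume moreover that \[ A^-(N)=A(N)=K. \] Then there exists an $f$-admissible isolating neighborhood $B\subset N$ of $K$ which is positively invariant, i.e. $f(B)\subset B$.
   Context: A full left solution of $f$ in a set $N$ is a sequence $\{x_{-n}\}_{n\in\mathbb N}\subset N$ with $f(x_{n-1})=x_n$ for all $n\le 0$. The following sets are defined for $N\subset Y$: \begin{itemize} \item $A^+(N)=\{x\in N: f^k(x)\in N \text{ for all } k\ge0\}$; \item $A^-(N)=\{x\in N: \text{there is a full left solution in } N \text{ through } x_0=x\}$; \item $A(N)=A^+(N)\cap A^-(N)$, the maximal invariant set in $N$. \end{itemize} A set $K$ is invariant if $A(K)=K$. It is an isolated invariant set, with isolating neighborhood $N$, if $N$ is a closed neighborhood of $K$ with $A(N)=K$. For $0\le l\le m$ put $f^{[l,m]}(x)=\{f^k(x): k\in\mathbb N\cap[l,m]\}$. A closed bounded set $N$ is $f$-admissible if, for any sequences $x_n\in Y$ and $m_n\to\infty$ with $f^{[0,m_n]}(x_n)\subset N$, the sequence $\{f^{m_n}(x_n)\}$ has a convergent subsequence. *)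

(* Defs.v *)
From Stdlib Require Import Reals.
Open Scope R_scope.

Section Metric.
Context {Y : Type} (d : Y -> Y -> R).

Definition is_metric : Prop :=
  (forall x y, 0 <= d x y) /\
  (forall x y, d x y = 0 <-> x = y) /\
  (forall x y, d x y = d y x) /\
  (forall x y z, d x z <= d x y + d y z).

Definition cauchy (u : nat -> Y) : Prop :=
  forall eps, 0 < eps -> exists N, forall n m, (N <= n)%nat -> (N <= m)%nat -> d (u n) (u m) < eps.

Definition converges_to (u : nat -> Y) (y : Y) : Prop :=
  forall eps, 0 < eps -> exists N, forall n, (N <= n)%nat -> d (u n) y < eps.

Definition mcomplete : Prop := forall u, cauchy u -> exists y, converges_to u y.

Definition separable : Prop :=
  exists D : Y -> Prop,
    (exists g : Y -> nat, forall x y, D x -> D y -> g x = g y -> x = y) /\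
    (forall x eps, 0 < eps -> exists z, D z /\ d x z < eps).

Definition mcontinuous (f : Y -> Y) : Prop :=
  forall x eps, 0 < eps -> exists delta, 0 < delta /\
    forall y, d x y < delta -> d (f x) (f y) < eps.

Definition mint (N : Y -> Prop) : Y -> Prop :=
  fun x => exists r, 0 < r /\ forall y, d x y < r -> N y.

Definition mclosed (N : Y -> Prop) : Prop :=
  forall x, (forall eps, 0 < eps -> exists y, N y /\ d x y < eps) -> N x.

Definition mbounded (N : Y -> Prop) : Prop :=
  exists x0 r, forall y, N y -> d x0 y <= r.

Definition subset (A B : Y -> Prop) : Prop := forall x, A x -> B x.
Definition set_eq (A B : Y -> Prop) : Prop := forall x, A x <-> B x.

Definition closed_nbhd (N K : Y -> Prop) : Prop :=
  mclosed N /\ subset K (mint N).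

Section Dyn.
Variable f : Y -> Y.

(* full left solution {x_{-n}} in N through x_0 = x, encoded as s n = x_{-n} *)
Definition full_left_solution_through (N : Y -> Prop) (x : Y) : Prop :=
  exists s : nat -> Y, s O = x /\ (forall n, N (s n)) /\ (forall n, f (s (S n)) = s n).

Definition Aplus (N : Y -> Prop) : Y -> Prop :=
  fun x => N x /\ forall k, N (Nat.iter k f x).

Definition Aminus (N : Y -> Prop) : Y -> Prop :=
  fun x => N x /\ full_left_solution_through N x.

Definition Amax (N : Y -> Prop) : Y -> Prop :=
  fun x => Aplus N x /\ Aminus N x.

Definition invariant (K : Y -> Prop) : Prop := set_eq (Amax K) K.

Definition isolating_nbhd (N K : Y -> Prop) : Prop :=
  closed_nbhd N K /\ set_eq (Amax N) K.

Definition isolated_invariant (K : Y -> Prop) : Prop :=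
  invariant K /\ exists N, isolating_nbhd N K.

Definition tends_to_infty (m : nat -> nat) : Prop :=
  forall M, exists n0, forall n, (n0 <= n)%nat -> (M <= m n)%nat.

Definition has_convergent_subseq (u : nat -> Y) : Prop :=
  exists (phi : nat -> nat) (y : Y),
    (forall n, (phi n < phi (S n))%nat) /\ converges_to (fun n => u (phi n)) y.

Definition orbit_segment_in (N : Y -> Prop) (m : nat) (x : Y) : Prop :=
  forall k, (k <= m)%nat -> N (Nat.iter k f x).

Definition admissible (N : Y -> Prop) : Prop :=
  mclosed N /\ mbounded N /\
  forall (x : nat -> Y) (m : nat -> nat),
    tends_to_infty m ->
    (forall n, orbit_segment_in N (m n) (x n)) ->
    has_convergent_subseq (fun n => Nat.iter (m n) f (x n)).

End Dyn.
End Metric.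

(* Main.v *)
Require Import Defs.
From Stdlib Require Import Reals Lia Lra Classical ClassicalEpsilon.
Open Scope R_scope.

Lemma arch_inv (eps : R) : 0 < eps -> exists K : nat, forall k, (K <= k)%nat -> / (INR k + 1) < eps.
Proof.
  intros He. destruct (archimed_cor1 eps He) as [N0 [HN HN0]].
  exists N0. intros k Hk.
  assert (H1 : 0 < INR N0) by (apply lt_0_INR; lia).
  assert (H2 : INR N0 <= INR k) by (apply le_INR; lia).
  eapply Rlt_trans; [|exact HN].
  apply Rinv_lt_contravar; [apply Rmult_lt_0_compat; lra | lra].
Qed.

Lemma dist_zero {Y} (d : Y -> Y -> R) a b : is_metric d ->
  (forall eps, 0 < eps -> d a b < eps) -> a = b.
Proof.
  intros [Hp [Hz _]] H. apply Hz.
  destruct (Rle_lt_or_eq_dec 0 (d a b) (Hp a b)) as [Hlt|Heq]; [|auto].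
  specialize (H _ Hlt). lra.
Qed.

Lemma iter_cont {Y} (d : Y -> Y -> R) f k : mcontinuous d f -> mcontinuous d (Nat.iter k f).
Proof.
  intros Hf. induction k as [|k IH]; intros x eps He.
  - exists eps. split; auto.
  - destruct (Hf (Nat.iter k f x) eps He) as [d1 [Hd1 H1]].
    destruct (IH x d1 Hd1) as [d2 [Hd2 H2]].
    exists d2. split; auto. intros y Hy. simpl. apply H1. apply H2. exact Hy.
Qed.

Lemma Amax_f {Y} (f : Y -> Y) N z : Amax f N z -> Amax f N (f z).
Proof.
  intros [[Hz Hk] [_ [s [Hs0 [HsN Hsf]]]]]. split; [split|split].
  - apply (Hk 1%nat).
  - intros k. rewrite Nat.iter_swap. apply (Hk (S k)).
  - apply (Hk 1%nat).
  - exists (fun n => match n with O => f z | S n' => s n' end). split; [reflexivity|split].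
    + intros [|n]; [apply (Hk 1%nat)|apply HsN].
    + intros [|n]; simpl; [rewrite Hs0; reflexivity| apply Hsf].
Qed.

Lemma Amax_iter {Y} (f : Y -> Y) N z k : Amax f N z -> Amax f N (Nat.iter k f z).
Proof. intros H. induction k; simpl; auto. apply Amax_f; auto. Qed.

Lemma back_iter {Y} (f : Y -> Y) (s : nat -> Y) : (forall n, f (s (S n)) = s n) ->
  forall k j, Nat.iter k f (s (k + j)%nat) = s j.
Proof.
  intros Hs k. induction k as [|k IH]; intros j; simpl; auto.
  replace (S (k + j)) with (k + S j)%nat by lia. rewrite IH. apply Hs.
Qed.

Lemma back_Aplus {Y} (f : Y -> Y) N (s : nat -> Y) : (forall n, N (s n)) ->
  (forall n, f (s (S n)) = s n) -> Aplus f N (s O) -> forall n, Aplus f N (s n).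
Proof.
  intros HN Hs [H0 Hk] n. split; auto. intros k.
  destruct (Compare_dec.le_lt_dec k n) as [Hle|Hlt].
  - replace n with (k + (n - k))%nat by lia. rewrite back_iter; auto.
  - replace k with ((k - n) + n)%nat by lia. rewrite Nat.iter_add.
    assert (E : Nat.iter n f (s n) = s O).
    { pose proof (back_iter f s Hs n O) as E. rewrite Nat.add_0_r in E. exact E. }
    rewrite E. auto.
Qed.

Lemma least_nat (P : nat -> Prop) : (exists k, P k) -> exists k, P k /\ forall j, (j < k)%nat -> ~ P j.
Proof.
  intros [k Hk]. revert Hk. induction k as [k IH] using (well_founded_induction Wf_nat.lt_wf).
  intros Hk. destruct (classic (exists j, (j < k)%nat /\ P j)) as [[j [Hj HPj]]|Hn].
  - exact (IH j Hj HPj).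
  - exists k. split; auto. intros j Hj HP. apply Hn. eauto.
Qed.

Lemma dep_chain (A : Type) (P : nat -> A -> Prop) (R : A -> A -> Prop) (a0 : A) :
  P O a0 -> (forall j a, P j a -> exists b, P (S j) b /\ R b a) ->
  exists s : nat -> A, s O = a0 /\ (forall n, P n (s n)) /\ (forall n, R (s (S n)) (s n)).
Proof.
  intros H0 Hstep.
  pose (g := fix g (n : nat) : {a : A | P n a} :=
    match n with
    | O => exist _ a0 H0
    | S n' => let (a, Ha) := g n' in
       let c := constructive_indefinite_description _ (Hstep n' a Ha) in
       exist _ (proj1_sig c) (proj1 (proj2_sig c))
    end).
  exists (fun n => proj1_sig (g n)). split; [reflexivity|split].
  - intros n. exact (proj2_sig (g n)).
  - intros n. simpl. destruct (g n) as [a Ha]. simpl.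
    exact (proj2 (proj2_sig (constructive_indefinite_description _ (Hstep n a Ha)))).
Qed.

Definition Pcl {Y} (d : Y -> Y -> R) (f : Y -> Y) (x : nat -> Y) (m : nat -> nat) (j : nat) (y : Y) : Prop :=
  forall eps, 0 < eps -> forall n0, exists n, (n0 <= n)%nat /\ (j < m n)%nat /\
    d (Nat.iter (m n - 1 - j) f (x n)) y < eps.

Lemma phi_ge (phi : nat -> nat) : (forall n, (phi n < phi (S n))%nat) -> forall k, (k <= phi k)%nat.
Proof. intros H k. induction k; [lia|]. specialize (H k). lia. Qed.

Lemma Pcl_N {Y} (d : Y -> Y -> R) (f : Y -> Y) (N : Y -> Prop) (x : nat -> Y) (m : nat -> nat) (j : nat) (y : Y) : is_metric d -> mclosed d N ->
  (forall n i, (i < m n)%nat -> N (Nat.iter i f (x n))) -> Pcl d f x m j y -> N y.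
Proof.
  intros [_ [_ [Hsym _]]] Hc Hx HP. apply Hc. intros eps He.
  destruct (HP eps He O) as [n [_ [Hj Hd]]].
  exists (Nat.iter (m n - 1 - j) f (x n)). split.
  - apply Hx. lia.
  - rewrite Hsym. exact Hd.
Qed.

Lemma Pcl_base {Y} (d : Y -> Y -> R) (f : Y -> Y) (N : Y -> Prop) (x : nat -> Y) (m : nat -> nat) : admissible d f N -> tends_to_infty m ->
  (forall n, (0 < m n)%nat) ->
  (forall n i, (i < m n)%nat -> N (Nat.iter i f (x n))) -> exists y, Pcl d f x m O y.
Proof.
  intros [_ [_ Hadm]] Ht Hm Hx.
  destruct (Hadm x (fun n => m n - 1)%nat) as [phi [y [Hphi Hcv]]].
  - intros M. destruct (Ht (S M)) as [n0 Hn0]. exists n0. intros n Hn. specialize (Hn0 n Hn). lia.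
  - intros n i Hi. apply Hx. specialize (Hm n). lia.
  - exists y. intros eps He n0. destruct (Hcv eps He) as [K1 HK1].
    exists (phi (Nat.max K1 n0)). pose proof (phi_ge phi Hphi (Nat.max K1 n0)).
    split; [lia|split; [apply Hm|]].
    rewrite Nat.sub_0_r. apply HK1. lia.
Qed.

Lemma Pcl_step {Y} (d : Y -> Y -> R) (f : Y -> Y) (N : Y -> Prop) (x : nat -> Y) (m : nat -> nat) (j : nat) (y : Y) : is_metric d -> mcontinuous d f -> admissible d f N -> tends_to_infty m ->
  (forall n i, (i < m n)%nat -> N (Nat.iter i f (x n))) ->
  Pcl d f x m j y -> exists y', Pcl d f x m (S j) y' /\ f y' = y.
Proof.
  intros Hmet Hf [_ [_ Hadm]] Ht Hx HP.
  assert (Hex : forall k : nat, exists n, (k <= n)%nat /\ (j < m n)%nat /\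
     d (Nat.iter (m n - 1 - j) f (x n)) y < / (INR k + 1)).
  { intros k. apply HP. apply Rinv_0_lt_compat. pose proof (pos_INR k). lra. }
  pose (nk := fun k => proj1_sig (constructive_indefinite_description _ (Hex k))).
  assert (Hnk : forall k, (k <= nk k)%nat /\ (j < m (nk k))%nat /\
     d (Nat.iter (m (nk k) - 1 - j) f (x (nk k))) y < / (INR k + 1)).
  { intros k. exact (proj2_sig (constructive_indefinite_description _ (Hex k))). }
  destruct (Hadm (fun k => x (nk k)) (fun k => m (nk k) - 1 - S j)%nat) as [phi [y' [Hphi Hcv]]].
  - intros M. destruct (Ht (M + j + 2)%nat) as [n0 Hn0]. exists n0. intros n Hn.
    specialize (Hn0 (nk n)). destruct (Hnk n) as [Hn1 _]. specialize (Hn0 ltac:(lia)). lia.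
  - intros k i Hi. apply Hx. destruct (Hnk k) as [_ [Hj _]]. lia.
  - exists y'. split.
    + intros eps He n0. destruct (Hcv eps He) as [K1 HK1].
      destruct (Ht (j + 2)%nat) as [n1 Hn1].
      set (k := Nat.max K1 (Nat.max n0 n1)).
      pose proof (phi_ge phi Hphi k). destruct (Hnk (phi k)) as [Ha [_ _]].
      exists (nk (phi k)). split; [lia|]. split.
      * specialize (Hn1 (nk (phi k)) ltac:(lia)). lia.
      * apply HK1. lia.
    + apply (dist_zero d); auto. intros eps He.
      destruct Hmet as [Hp [Hz [Hsym Htri]]].
      destruct (Hf y' (eps/2) ltac:(lra)) as [del [Hdel Hcont]].
      destruct (Hcv del Hdel) as [K1 HK1].
      destruct (arch_inv (eps/2) ltac:(lra)) as [K2 HK2].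
      destruct (Ht (j + 2)%nat) as [n1 Hn1].
      set (k := Nat.max K1 (Nat.max K2 n1)).
      pose proof (phi_ge phi Hphi k). destruct (Hnk (phi k)) as [Ha [_ Hb]].
      specialize (Hn1 (nk (phi k)) ltac:(lia)).
      specialize (HK1 k ltac:(lia)). simpl in HK1.
      specialize (HK2 (phi k) ltac:(lia)).
      set (n := nk (phi k)) in *.
      assert (E : f (Nat.iter (m n - 1 - S j) f (x n)) = Nat.iter (m n - 1 - j) f (x n)).
      { rewrite <- Nat.iter_succ. f_equal. lia. }
      rewrite Hsym in HK1. specialize (Hcont _ HK1). rewrite E in Hcont.
      pose proof (Htri (f y') (Nat.iter (m n - 1 - j) f (x n)) y). lra.
Qed.

Lemma backward {Y} (d : Y -> Y -> R) (f : Y -> Y) (N : Y -> Prop) (x : nat -> Y) (m : nat -> nat) : is_metric d -> mcontinuous d f -> admissible d f N -> tends_to_infty m ->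
  (forall n, (0 < m n)%nat) ->
  (forall n i, (i < m n)%nat -> N (Nat.iter i f (x n))) ->
  exists y, Pcl d f x m O y /\ full_left_solution_through f N y.
Proof.
  intros Hmet Hf Hadm Ht Hm Hx.
  destruct (Pcl_base d f N x m Hadm Ht Hm Hx) as [y0 H0].
  destruct (dep_chain Y (Pcl d f x m) (fun b a => f b = a) y0 H0) as [s [Hs0 [HsP Hsf]]].
  { intros j a Ha. exact (Pcl_step d f N x m j a Hmet Hf Hadm Ht Hx Ha). }
  exists y0. split; auto. exists s. split; auto. split; auto.
  intros n. apply (Pcl_N d f N x m n); auto. apply Hadm.
Qed.

Lemma uniform {Y} (d : Y -> Y -> R) (f : Y -> Y) (N K : Y -> Prop) (z : Y) :
  mcontinuous d f -> (forall z, K z -> mint d N z) ->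
  (forall k, K (Nat.iter k f z)) ->
  forall M, exists del, 0 < del /\ forall y, d z y < del -> forall k, (k < M)%nat -> N (Nat.iter k f y).
Proof.
  intros Hf HKN HK M. induction M as [|M [d1 [Hd1 IH]]].
  - exists 1. split; [lra|]. intros; lia.
  - destruct (HKN _ (HK M)) as [r [Hr Hball]].
    destruct (iter_cont d f M Hf z r Hr) as [d2 [Hd2 H2]].
    exists (Rmin d1 d2). split; [apply Rmin_pos; auto|].
    intros y Hy k Hk.
    assert (Hy1 : d z y < d1) by (eapply Rlt_le_trans; [exact Hy| apply Rmin_l]).
    assert (Hy2 : d z y < d2) by (eapply Rlt_le_trans; [exact Hy| apply Rmin_r]).
    destruct (Nat.eq_dec k M) as [->|Hne].
    + apply Hball. apply H2. exact Hy2.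
    + apply IH; auto. lia.
Qed.

Lemma key {Y} (d : Y -> Y -> R) (f : Y -> Y) (N K : Y -> Prop) :
  is_metric d -> mcontinuous d f -> admissible d f N ->
  (forall z, K z -> mint d N z) -> (forall y, Aminus f N y -> K y) ->
  (forall z, K z -> Amax f N z) -> (forall z, Amax f N z -> K z) ->
  forall z, K z -> mint d (Aplus f N) z.
Proof.
  intros Hmet Hf Hadm HKN HAK HKA HAK2 z Hz.
  assert (HKit : forall k y, K y -> K (Nat.iter k f y)).
  { intros k y Hy. apply HAK2. apply Amax_iter. auto. }
  apply NNPP. intros Hn.
  destruct (HKN z Hz) as [r0 [Hr0 Hball0]].
  assert (Hex : forall n : nat, exists p : Y * nat,
    d z (fst p) < Rmin r0 (/ (INR n + 1)) /\ ~ N (Nat.iter (snd p) f (fst p)) /\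
    forall i, (i < snd p)%nat -> N (Nat.iter i f (fst p))).
  { intros n. assert (Hrho : 0 < Rmin r0 (/ (INR n + 1))).
    { apply Rmin_pos; auto. apply Rinv_0_lt_compat. pose proof (pos_INR n). lra. }
    apply NNPP. intros Hn2. apply Hn. exists (Rmin r0 (/ (INR n + 1))). split; auto.
    intros y Hy. split.
    - apply Hball0. eapply Rlt_le_trans; [exact Hy|apply Rmin_l].
    - intros k. apply NNPP. intros Hk.
      destruct (least_nat (fun k => ~ N (Nat.iter k f y))) as [k' [Hk' Hmin]]; [eauto|].
      apply Hn2. exists (y, k'). simpl. split; auto. split; auto.
      intros i Hi. apply NNPP. apply Hmin. auto. }
  pose (p := fun n => proj1_sig (constructive_indefinite_description _ (Hex n))).
  assert (Hp : forall n, d z (fst (p n)) < Rmin r0 (/ (INR n + 1)) /\ ~ N (Nat.iter (snd (p n)) f (fst (p n))) /\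
    forall i, (i < snd (p n))%nat -> N (Nat.iter i f (fst (p n)))).
  { intros n. exact (proj2_sig (constructive_indefinite_description _ (Hex n))). }
  set (x := fun n => fst (p n)). set (m := fun n => snd (p n)).
  assert (Hm : forall n, (0 < m n)%nat).
  { intros n. destruct (Hp n) as [H1 [H2 _]]. unfold m.
    destruct (snd (p n)) eqn:E; [|lia]. exfalso. apply H2. simpl. apply Hball0.
    eapply Rlt_le_trans; [exact H1|apply Rmin_l]. }
  assert (Hx : forall n i, (i < m n)%nat -> N (Nat.iter i f (x n))).
  { intros n. apply (Hp n). }
  assert (Hnot : forall n, ~ N (Nat.iter (m n) f (x n))) by (intros n; apply (Hp n)).
  assert (Hdist : forall n, d z (x n) < / (INR n + 1)).
  { intros n. eapply Rlt_le_trans; [apply (Hp n)|apply Rmin_r]. }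
  destruct (classic (tends_to_infty m)) as [Ht|Hnt].
  - destruct (backward d f N x m Hmet Hf Hadm Ht Hm Hx) as [y [HP Hfl]].
    assert (HyN : N y) by (apply (Pcl_N d f N x m O y Hmet (proj1 Hadm) Hx HP)).
    assert (HKy : K y) by (apply HAK; split; auto).
    destruct (HKN (f y) (HKit 1%nat y HKy)) as [r1 [Hr1 Hb1]].
    destruct (Hf y r1 Hr1) as [del [Hdel Hc]].
    destruct (HP del Hdel O) as [n [_ [_ Hdn]]].
    apply (Hnot n). 
    replace (m n) with (S (m n - 1 - 0)) by (specialize (Hm n); lia).
    rewrite Nat.iter_succ. apply Hb1. apply Hc.
    destruct Hmet as [_ [_ [Hsym _]]]. rewrite Hsym. exact Hdn.
  - apply not_all_ex_not in Hnt. destruct Hnt as [M HM].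
    destruct (uniform d f N K z Hf HKN (fun k => HKit k z Hz) M) as [del [Hdel Hu]].
    destruct (arch_inv del Hdel) as [n0 Hn0].
    apply HM. exists n0. intros n Hn1. apply NNPP. intros Hlt.
    apply (Hnot n). apply Hu; [|lia].
    eapply Rlt_trans; [apply Hdist|]. apply Hn0. exact Hn1.
Qed.

Theorem theorem1 (Y : Type) (d : Y -> Y -> R) (f : Y -> Y) (K N N' : Y -> Prop) :
  is_metric d -> mcomplete d -> separable d -> mcontinuous d f ->
  (exists x, K x) ->
  isolated_invariant d f K ->
  admissible d f N -> isolating_nbhd d f N K ->
  admissible d f N' -> isolating_nbhd d f N' K ->
  subset N (fun x => mint d N' x /\ mint d N' (f x)) ->
  set_eq (Aminus f N) (Amax f N) ->
  set_eq (Amax f N) K ->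
  exists B : Y -> Prop,
    admissible d f B /\ isolating_nbhd d f B K /\ subset B N /\
    (forall x, B x -> B (f x)).
Proof.
  intros Hmet _ _ Hf _ _ Hadm [[Hcl HKN] _] _ _ _ HAm HAK.
  assert (Hsym : forall a b, d a b = d b a) by apply Hmet.
  assert (HBcl : mclosed d (Aplus f N)).
  { intros x Hx. split.
    - apply Hcl. intros eps He. destruct (Hx eps He) as [y [[Hy _] Hd]]. eauto.
    - intros k. apply Hcl. intros eps He.
      destruct (iter_cont d f k Hf x eps He) as [del [Hdel Hc]].
      destruct (Hx del Hdel) as [y [[_ Hy] Hd]]. exists (Nat.iter k f y). split; auto. }
  assert (HKA : forall z, K z -> Amax f N z) by (intros z; apply HAK).
  exists (Aplus f N). split; [|split; [|split]].
  - destruct Hadm as [_ [Hb Ha]]. split; auto. split.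
    + destruct Hb as [x0 [r Hr]]. exists x0, r. intros y [Hy _]. auto.
    + intros x m Ht Hs. apply Ha; auto. intros n k Hk. apply (Hs n k Hk).
  - split; [split; auto|].
    + intros z Hz. apply (key d f N K); auto.
      * intros y Hy. apply HAK, HAm, Hy.
      * intros y Hy. apply HAK, Hy.
    + intros x. split.
      * intros [[[Hx _] Hk] [_ [s [Hs0 [HsN Hsf]]]]]. apply HAK. split; [split|split].
        -- exact Hx.
        -- intros k. apply (Hk k).
        -- exact Hx.
        -- exists s. split; auto. split; auto. intros n. apply HsN.
      * intros Hx. pose proof (HKA x Hx) as [HAp [_ [s [Hs0 [HsN Hsf]]]]].
        assert (Hit : forall k, Aplus f N (Nat.iter k f x)).
        { intros k. apply (Amax_iter f N x k (HKA x Hx)). }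
        split; [split|split].
        -- exact HAp.
        -- exact Hit.
        -- exact HAp.
        -- exists s. split; auto. split; auto.
           apply back_Aplus; auto. rewrite Hs0. exact HAp.
  - intros x [Hx _]. exact Hx.
  - intros x [Hx Hk]. split.
    + apply (Hk 1%nat).
    + intros k. rewrite Nat.iter_swap. apply (Hk (S k)).
Qed.
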